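(* Let $a,n$ be coprime positive integers and let $\pi\in S(\mathbb{Z}_n)$ be given by $\pi(x)=ax$. Then $t([\pi])=n-\sum_{d\mid n}\frac{\varphi(d)}{\mathrm{ord}_d(a)}$, the sum running over positive divisors $d$ of $n$.
   Context: $S(\mathbb{Z}_n)$ is the set of bijections $\mathbb{Z}_n\to\mathbb{Z}_n$. For $\pi\in S(\mathbb{Z}_n)$, $\mathrm{cyc}(\pi)$ is the number of cycles (including fixed points) of $\pi$, $t(\pi)=n-\mathrm{cyc}(\pi)$, $[\pi]=\{x\mapsto \pi(x+b): b\in\mathbb{Z}_n\}$ and $t([\pi])=\min_{\sigma\in[\pi]}t(\sigma)$. $\varphi$ is Euler's totient function and $\mathrm{ord}_d(a)$ is the multiplicative order of $a\bmod d$ in $\mathbb{Z}_d^\times$ (with $\mathrm{ord}_1(a)=1$). *)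

(* Defs.v *)
From mathcomp Require Import all_boot all_order all_algebra.
Set Implicit Arguments. Unset Strict Implicit. Unset Printing Implicit Defensive.

(* Z_n is represented by 'I_n (residues 0..n-1); maps are computed mod n. *)
Definition pos_of (n : nat) (x : 'I_n) : 0 < n :=
  leq_ltn_trans (leq0n x) (ltn_ord x).

Definition mulZn (n a : nat) (x : 'I_n) : 'I_n :=
  Ordinal (ltn_pmod (a * x) (pos_of x)).

Definition addZn (n : nat) (b : 'I_n) (x : 'I_n) : 'I_n :=
  Ordinal (ltn_pmod (x + b) (pos_of x)).

(* number of cycles (incl. fixed points) of a map f : 'I_n -> 'I_n;
   for a bijection this is the number of f-orbits *)
Definition cyc (n : nat) (f : 'I_n -> 'I_n) : nat := fcard f 'I_n.

Definition tperm (n : nat) (f : 'I_n -> 'I_n) : nat := n - cyc f.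

(* t([pi]) = min over b in Z_n of t(x |-> pi(x + b)); all values are <= n,
   so n is a harmless initial value for the minimum (and 'I_n is nonempty
   when n > 0). *)
Definition tclass (n : nat) (f : 'I_n -> 'I_n) : nat :=
  \big[minn/n]_(b : 'I_n) tperm (fun x => f (addZn b x)).

(* ord_d(a): least k >= 1 with a^k = 1 (mod d); ord_1(a) = 1.
   For a coprime to d such a k exists and k <= phi(d) <= d, so searching
   k in 1..d is exhaustive. *)
Definition ord_mod (d a : nat) : nat :=
  head 0 [seq k <- iota 1 d | a ^ k == 1 %[mod d]].

(* Main.v *)
Require Import Defs.
From mathcomp Require Import all_boot all_order all_algebra.
From mathcomp Require Import cyclic zify.
Set Implicit Arguments. Unset Strict Implicit. Unset Printing Implicit Defensive.
Import GRing.Theory Num.Theory.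

Section Orb.
Variables (T : finType) (f : T -> T).
Hypothesis injf : injective f.

Lemma iter_order_dvd x k : (iter k f x == x) = (order f x %| k).
Proof.
have o0 := order_gt0 f x.
have Hm : forall m, iter (m * order f x) f x = x.
  by elim=> [|m IH] //=; rewrite mulSn iterD IH (iter_order injf).
rewrite {1}(divn_eq k (order f x)) addnC iterD Hm /dvdn.
have lt := ltn_pmod k o0.
case: eqP => [E|NE].
  by rewrite -(findex_iter lt) E findex0.
by apply/esym/eqP => H; apply: NE; rewrite H.
Qed.

Lemma count_dvd o L : 0 < o -> o %| L -> \sum_(0 <= k < L) (o %| k) = L %/ o.
Proof.
move=> o0 /dvdnP [q ->]; rewrite mulnK //.
elim: q => [|q IH]; first by rewrite big_geq.
rewrite mulSn addnC (big_cat_nat _ (n := q * o)) ?leq_addr // IH /=.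
rewrite -{1}(add0n (q * o)) big_addn.
rewrite addKn.
under eq_bigr => i _ do rewrite dvdn_addl ?dvdn_mull //.
rewrite big_ltn // dvdn0 big_nat big1 => [|i /andP[i0 io]].
  by rewrite addn0 /= addn1.
by rewrite /dvdn modn_small //; case: i i0 io.
Qed.

Lemma order_lt x : order f x < #|T|.+1.
Proof. by rewrite ltnS /order max_card. Qed.

Lemma part_order (F : T -> nat) (P : pred T) :
  \sum_(x | P x) F x =
  \sum_(o < #|T|.+1) \sum_(x | P x && (order f x == o)) F x.
Proof.
rewrite (partition_big (fun x => Ordinal (order_lt x)) xpredT) //.
Qed.

Lemma fclosed_os o : fclosed f (order_set f o).
Proof.
move=> x y /eqP <-; rewrite !inE /order.
by rewrite (eq_card (same_fconnect1 injf x)).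
Qed.

Lemma sum_div_order L : (forall x, order f x %| L) ->
  \sum_x L %/ order f x = fcard f T * L.
Proof.
move=> dL.
rewrite (part_order (fun x => L %/ order f x) xpredT).
have -> : fcard f T = \sum_(o < #|T|.+1) fcard f (order_set f o).
  rewrite /n_comp_mem -sum1_card (part_order (fun => 1)).
  apply: eq_bigr => o _.
  transitivity (\sum_(x in predI (froots f) (mem (order_set f o))) 1).
    by apply: eq_bigl => x; rewrite !inE andbT.
  by rewrite sum1_card.
rewrite big_distrl /=; apply: eq_bigr => o _.
rewrite (eq_bigr (fun => L %/ o)); last by move=> x /eqP ->.
rewrite sum_nat_const.
have -> : #|[pred x | order f x == o]| = #|order_set f o|.
  by apply: eq_card => x; rewrite !inE.
rewrite -(fcard_order_set injf (subxx _) (@fclosed_os o)) -mulnA.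
have [oL|noL] := boolP (o %| L).
  case: (posnP o) => [o0|opos]; last by rewrite [o * _]mulnC divnK.
  by move: oL; rewrite o0 dvd0n => /eqP ->; rewrite muln0.
have -> : fcard f (order_set f o) = 0; last by [].
apply/eqP; rewrite -leqn0; apply: leq_trans (_ : #|order_set f o| <= 0).
  by apply: subset_leq_card; apply/subsetP => x; rewrite !inE => /andP[].
rewrite leqn0; apply/eqP/eq_card0 => x; rewrite !inE.
by apply/negP => /eqP E; move: (dL x); rewrite E (negbTE noL).
Qed.

Lemma burnside L : (forall x, order f x %| L) ->
  \sum_(0 <= k < L) #|[pred x | iter k f x == x]| = fcard f T * L.
Proof.
move=> dL; rewrite -sum_div_order //.
under eq_bigr => k _ do rewrite -sum1_card big_mkcond /=.
rewrite exchange_big /=; apply: eq_bigr => x _.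
rewrite -count_dvd ?order_gt0 //; apply: eq_bigr => k _.
by rewrite inE iter_order_dvd.
Qed.

Local Open Scope ring_scope.
Lemma orbit_sum : (fcard f T)%:R = \sum_x 1 / (order f x)%:R :> rat.
Proof.
set L := #|T|`!.
have dL : forall x, (order f x %| L)%N.
  by move=> x; apply: dvdn_fact; rewrite order_gt0 -ltnS order_lt.
have L0 : L%:R != 0 :> rat by rewrite pnatr_eq0 -lt0n fact_gt0.
apply: (mulIf L0); rewrite -natrM -sum_div_order // natr_sum big_distrl /=.
apply: eq_bigr => x _; rewrite natf_div //. by rewrite mul1r mulrC.
Qed.

End Orb.
Lemma cong_aff a c n u v w : u = v + w %[mod n] ->
  (a * u + c) = (a * v + c) %% n + (a * w) %% n %[mod n].
Proof.
move=> H; rewrite modnDm -modnDml -modnMmr H modnMmr modnDml mulnDr.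
by rewrite addnAC.
Qed.

Section Aff.
Variables (n a c : nat) (f g : 'I_n -> 'I_n).
Hypothesis cop : coprime a n.
Hypothesis hf : forall x, val (f x) = (a * x + c) %% n.
Hypothesis hg : forall x, val (g x) = (a * x) %% n.

Lemma ord_mod_eq (x y : 'I_n) : x = y %[mod n] -> x = y.
Proof. by move=> H; apply: val_inj; rewrite /= -(modn_small (ltn_ord x)) H modn_small. Qed.

Lemma mul_cancel (x y : 'I_n) : a * x = a * y %[mod n] -> x = y.
Proof.
have key : forall x y : 'I_n, a * x = a * y %[mod n] -> y <= x -> x = y.
  move=> u v /eqP H le; move: H; rewrite eqn_mod_dvd ?leq_mul2l ?le ?orbT //.
  rewrite -mulnBr Gauss_dvdr; last by rewrite coprime_sym.
  move=> dv; apply: val_inj => /=; apply/eqP; rewrite eqn_leq le andbT.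
  rewrite -subn_eq0; apply/eqP; apply/eqP; rewrite -(modn_small (_ : u - v < n)).
    by rewrite -/(dvdn n _) dv.
  exact: leq_ltn_trans (leq_subr _ _) (ltn_ord u).
move=> H; case: (leqP y x) => le; first exact: key.
by apply/esym/key => //; apply: ltnW.
Qed.

Lemma f_inj : injective f.
Proof.
move=> x y /(congr1 val) /eqP; rewrite !hf eqn_modDr => /eqP.
exact: mul_cancel.
Qed.

Lemma g_inj : injective g.
Proof. by move=> x y /(congr1 val); rewrite !hg; apply: mul_cancel. Qed.

Lemma iter_diff k (x y z : 'I_n) : x = y + z %[mod n] ->
  iter k f x = iter k f y + iter k g z %[mod n].
Proof.
elim: k => [|k IH] H //=.
by rewrite hf modn_mod (@cong_aff a c n _ _ _ (IH H)) hf hg.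
Qed.

Lemma fix_le k : #|[pred x | iter k f x == x]| <= #|[pred x | iter k g x == x]|.
Proof.
case: (pickP [pred x | iter k f x == x]) => [x0 Hx0 | none]; last by rewrite eq_card0.
have n0 := pos_of x0.
pose z (x : 'I_n) : 'I_n := Ordinal (ltn_pmod (x + (n - x0)) n0).
have hz : forall x : 'I_n, x = x0 + z x %[mod n].
  move=> x; rewrite /= modnDmr.
  have -> : x0 + (x + (n - x0)) = x + n by have := ltn_ord x0; lia.
  by rewrite modnDr.
set A := [pred x | iter k f x == x].
rewrite -(card_in_imset (f := z) (D := A)).
  apply: subset_leq_card; apply/subsetP => _ /imsetP [x Ax ->].
  rewrite inE; apply/eqP/ord_mod_eq.
  move/eqP: Hx0 => Hx0; move: Ax; rewrite inE => /eqP Ax.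
  apply/eqP; rewrite -(eqn_modDl x0) -(hz x) eq_sym; apply/eqP.
  by have := iter_diff k (hz x); rewrite Ax Hx0.
move=> x y _ _ E; apply: ord_mod_eq.
by rewrite (hz x) (hz y) E.
Qed.

End Aff.
Lemma ord_mod_spec d a k0 : 0 < k0 -> a ^ k0 == 1 %[mod d] ->
  (forall k, 0 < k < k0 -> ~~ (a ^ k == 1 %[mod d])) ->
  (exists2 k1, 0 < k1 <= d & a ^ k1 == 1 %[mod d]) -> ord_mod d a = k0.
Proof.
move=> k0p Pk0 minP [k1 /andP [k1p k1d] Pk1].
have k0k1 : k0 <= k1.
  by rewrite leqNgt; apply/negP => lt; move: (minP k1); rewrite k1p lt Pk1 => /(_ isT).
have k0d : k0 <= d by apply: leq_trans k1d.
rewrite /ord_mod.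
rewrite [in iota 1 d](_ : d = k0.-1 + (d - k0).+1); last by lia.
rewrite iotaD filter_cat.
have -> : [seq k <- iota 1 k0.-1 | a ^ k == 1 %[mod d]] = [::].
  apply/eqP; rewrite -[_ == _]negbK -has_filter; apply/hasPn => k.
  rewrite mem_iota => /andP [k1' k2]; apply: minP; rewrite k1'; lia.
have -> : 1 + k0.-1 = k0 by lia.
by rewrite /= Pk0.
Qed.

Lemma sum_bool_count (T : eqType) (s : seq T) (P : pred T) :
  \sum_(i <- s) (P i : nat) = count P s.
Proof. by elim: s => [|y s IH]; rewrite ?big_nil ?big_cons //= IH. Qed.

Lemma card_ordP n (P : pred nat) : #|[pred x : 'I_n | P x]| = count P (iota 0 n).
Proof.
rewrite -sum1_card -sum_bool_count.
rewrite (big_mkcond (fun x : 'I_n => P x)) /=.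
rewrite -(big_mkord xpredT (fun i => if P i then 1 else 0)) /index_iota subn0.
by apply: eq_bigr => i _; case: (P i).
Qed.

Lemma totient_le d : totient d <= d.
Proof.
rewrite totient_count_coprime.
apply: leq_trans (_ : \sum_(0 <= i < d) 1 <= d); last by rewrite sum_nat_const_nat subn0 muln1.
by apply: leq_sum => i _; case: (coprime d i).
Qed.

Lemma card_gx n d : 0 < n -> d %| n ->
  #|[pred x : 'I_n | n %/ gcdn x n == d]| = totient d.
Proof.
move=> n0 dn.
have d0 : 0 < d by apply: dvdn_gt0 dn.
set e := n %/ d.
have ne : n = e * d by rewrite /e divnK.
have e0 : 0 < e by rewrite /e divn_gt0 // dvdn_leq.
rewrite (card_ordP n (fun y => n %/ gcdn y n == d)) -size_filter.
rewrite totient_count_coprime.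
have -> : \sum_(0 <= u < d) coprime d u = size [seq e * u | u <- [seq u <- iota 0 d | coprime u d]].
  rewrite size_map size_filter -sum_bool_count /index_iota subn0.
  by apply: eq_bigr => i _; rewrite coprime_sym.
apply: perm_size; apply: uniq_perm.
- by apply: filter_uniq; apply: iota_uniq.
- rewrite map_inj_uniq; first by apply: filter_uniq; apply: iota_uniq.
  by move=> u v /eqP; rewrite eqn_pmul2l // => /eqP.
move=> x; rewrite mem_filter mem_iota add0n /=.
apply/idP/idP.
- move=> /andP [/eqP gx xn].
  have gdn : gcdn x n %| n := dvdn_gcdr x n.
  have g0 : 0 < gcdn x n by rewrite gcdn_gt0 n0 orbT.
  have ge : gcdn x n = e.
    by rewrite /e -gx divnA // mulKn.
  have ex : e %| x by rewrite -ge dvdn_gcdl.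
  apply/mapP; exists (x %/ e); last by rewrite mulnC divnK.
  rewrite mem_filter mem_iota add0n /=.
  have hx : x = e * (x %/ e) by rewrite mulnC divnK.
  apply/andP; split.
    by rewrite /coprime -(eqn_pmul2l e0) muln1 muln_gcdr -hx -ne ge.
  by rewrite -(ltn_pmul2l e0) -hx -ne.
- move=> /mapP [u]; rewrite mem_filter mem_iota add0n /= => /andP [cu ud] ->.
  rewrite ne ltn_pmul2l // ud andbT -muln_gcdr.
  by move: cu; rewrite /coprime => /eqP ->; rewrite muln1 mulKn.
Qed.

Lemma gx_dvd n (x : nat) : 0 < n -> n %/ gcdn x n %| n.
Proof.
move=> n0; apply/dvdnP; exists (gcdn x n); by rewrite mulnC divnK // dvdn_gcdr.
Qed.

Lemma gx_gt0 n (x : nat) : 0 < n -> 0 < n %/ gcdn x n.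
Proof.
move=> n0; rewrite divn_gt0 ?gcdn_gt0 ?n0 ?orbT //.
by apply: dvdn_leq => //; apply: dvdn_gcdr.
Qed.

Section Order.
Variables (n a : nat) (g : 'I_n -> 'I_n).
Hypothesis a0 : 0 < a.
Hypothesis cop : coprime a n.
Hypothesis hg : forall x, val (g x) = (a * x) %% n.

Lemma iter_g k (x : 'I_n) : val (iter k g x) = (a ^ k * x) %% n.
Proof.
elim: k => [|k IH] /=; first by rewrite mul1n modn_small.
by rewrite hg IH modnMmr mulnA -expnS.
Qed.

Lemma iter_g_eq k (x : 'I_n) :
  (iter k g x == x) = (a ^ k == 1 %[mod n %/ gcdn x n]).
Proof.
have n0 := pos_of x.
set e := gcdn x n.
have e0 : 0 < e by rewrite gcdn_gt0 n0 orbT.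
set d := n %/ e. set x' := x %/ e.
have hn : n = e * d by rewrite /d mulnC divnK // dvdn_gcdr.
have hx : (x : nat) = e * x' by rewrite /x' mulnC divnK // dvdn_gcdl.
have cop' : coprime d x'.
  by rewrite /coprime gcdnC -(eqn_pmul2l e0) muln1 muln_gcdr -hx -hn.
have ak : 0 < a ^ k by rewrite expn_gt0 a0.
rewrite -val_eqE iter_g -[X in _ == X](modn_small (ltn_ord x)).
rewrite eqn_mod_dvd; last by rewrite leq_pmull.
rewrite -[X in _ - X]mul1n -mulnBl.
rewrite [X in X %| _]hn hx mulnCA dvdn_pmul2l // Gauss_dvdl //.
by rewrite eqn_mod_dvd.
Qed.

Lemma order_g (x : 'I_n) : order g x = ord_mod (n %/ gcdn x n) a.
Proof.
have n0 := pos_of x.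
have ginj := g_inj cop hg.
symmetry; apply: ord_mod_spec.
- exact: order_gt0.
- by rewrite -iter_g_eq (iter_order ginj).
- move=> k /andP [k0 klt]; rewrite -iter_g_eq; apply/negP => /eqP E.
  have := findex_iter klt; rewrite E findex0 => k0'.
  by rewrite -k0' in k0.
- exists (totient (n %/ gcdn x n)).
    by rewrite totient_gt0 gx_gt0 // totient_le.
  apply/eqP; apply: Euler_exp_totient.
  exact: coprime_dvdr (gx_dvd _ n0) cop.
Qed.

End Order.

Local Open Scope ring_scope.

Lemma regroup n (H : nat -> rat) : (0 < n)%N ->
  \sum_(x : 'I_n) H (n %/ gcdn x n)%N =
  \sum_(d <- divisors n) #|[pred x : 'I_n | (n %/ gcdn x n == d)%N]|%:R * H d.
Proof.
move=> n0.
have E : forall x : 'I_n, H (n %/ gcdn x n)%N =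
   \sum_(d <- divisors n | d == (n %/ gcdn x n)%N) H d.
  move=> x; rewrite -big_filter filter_pred1_uniq ?divisors_uniq ?big_seq1 //.
  by rewrite -dvdn_divisors // gx_dvd.
rewrite (eq_bigr _ (fun x _ => E x)).
under eq_bigr => x _ do rewrite big_mkcond.
rewrite exchange_big /=.
apply: eq_bigr => d _; rewrite -big_mkcond sumr_const mulr_natl; congr (_ *+ _).
by apply: eq_card => x; rewrite !inE eq_sym.
Qed.

Lemma bigmin_le (I : eqType) (s : seq I) (F : I -> nat) m i0 :
  i0 \in s -> (\big[minn/m]_(i <- s) F i <= F i0)%N.
Proof.
elim: s => // y s IH; rewrite inE big_cons => /orP [/eqP -> | H].
  exact: geq_minl.
exact: leq_trans (geq_minr _ _) (IH H).
Qed.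

Unset Implicit Arguments.

Theorem proposition3p3 (a n : nat) (ha : (0 < a)%N) (hn : (0 < n)%N)
  (hcop : coprime a n) :
  (tclass (@mulZn n a))%:R =
    n%:R - \sum_(d <- divisors n) ((totient d)%:R / (ord_mod d a)%:R) :> rat.
Proof.
set S := \sum_(d <- divisors n) _.
pose g := @mulZn n a.
have hg : forall x, val (g x) = ((a * x) %% n)%N by [].
pose F (b : 'I_n) := fun x => mulZn a (addZn b x).
have hF : forall b x, val (F b x) = ((a * x + a * b) %% n)%N.
  by move=> b x; rewrite /= modnMmr mulnDr.
have ginj := g_inj hcop hg.
have cycg : (fcard g 'I_n)%:R = S :> rat.
  rewrite (orbit_sum ginj).
  under eq_bigr => x _ do rewrite (order_g ha hcop hg).
  have := regroup (fun d => 1 / (ord_mod d a)%:R) hn; move=> /= ->.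
  rewrite /S; apply: eq_big_seq => d; rewrite -dvdn_divisors // => dn.
  by rewrite card_gx // mul1r.
have le : forall b, (fcard (F b) 'I_n <= fcard g 'I_n)%N.
  move=> b; set L := (#|'I_n|)`!.
  have dL : forall (h : 'I_n -> 'I_n) x, (order h x %| L)%N.
    by move=> h x; apply: dvdn_fact; rewrite order_gt0 -ltnS order_lt.
  have L0 : (0 < L)%N := fact_gt0 _.
  rewrite -(leq_pmul2r L0) -(burnside (f_inj hcop (hF b)) (dL _)) -(burnside ginj (dL _)).
  by apply: leq_sum => k _; exact: (fix_le hcop (hF b) hg).
have F0 : fcard (F (Ordinal hn)) 'I_n = fcard g 'I_n.
  by apply: eq_fcard => x; apply: val_inj; rewrite hF hg /= muln0 addn0.
have cg_le : (fcard g 'I_n <= n)%N.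
  by apply: leq_trans (max_card _) _; rewrite card_ord.
have -> : tclass (@mulZn n a) = (n - fcard g 'I_n)%N.
  rewrite /tclass; apply/eqP; rewrite eqn_leq; apply/andP; split.
    apply: leq_trans (bigmin_le _ _ (mem_index_enum (Ordinal hn))) _.
    by change (n - fcard (F (Ordinal hn)) 'I_n <= n - fcard g 'I_n)%N; rewrite F0.
  apply: (big_ind (fun m => n - fcard g 'I_n <= m)%N).
  - exact: leq_subr.
  - by move=> x y; rewrite leq_min => -> ->.
  - move=> b _; change (n - fcard g 'I_n <= n - fcard (F b) 'I_n)%N.
    exact: leq_sub2l (le b).
by rewrite natrB // cycg.
Qed.
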